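(* Let $\alpha>0$ and $\beta>0$ be real numbers. A $2\times 2$ table $P=\begin{pmatrix} p_{00} & p_{01}\\ p_{10} & p_{11}\end{pmatrix}$ (i.e. $p_{ij}>0$ for all $i,j\in\{0,1\}$ and $p_{00}+p_{01}+p_{10}+p_{11}=1$) satisfies \[ \frac{p_{00}p_{11}}{p_{01}p_{10}}=\alpha^2 \quad\text{and}\quad \frac{p_{00}p_{10}}{p_{01}p_{11}}=\beta^2 \] if and only if there exists a real number $v$ with $0<v<\frac{1}{\alpha+\beta}$ such that \[ P=\begin{pmatrix} \frac{\beta}{\beta+\frac{1}{\alpha}}\,[1-(\beta+\alpha)v] & \frac{1}{\alpha\beta+1}\,[1-(\beta+\alpha)v]\\ \beta v & \alpha v\end{pmatrix}. \]
   Context: A $2\times 2$ table is a point of the open probability simplex $\Delta=\{(p_{ij})\in\mathbb{A}^4: \sum p_{ij}=1,\ p_{ij}>0\}$. The odds ratios are $r_\times=\frac{p_{00}p_{11}}{p_{01}p_{10}}$ and $r_{||}=\frac{p_{00}p_{10}}{p_{01}p_{11}}$, written as $r_\times=\alpha^2$, $r_{||}=\beta^2$ with $\alpha,\beta>0$. *)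

(* Defs.v *)
From Stdlib Require Import Reals.
Open Scope R_scope.

Definition is_table (p00 p01 p10 p11 : R) : Prop :=
  0 < p00 /\ 0 < p01 /\ 0 < p10 /\ 0 < p11 /\ p00 + p01 + p10 + p11 = 1.

(* Main.v *)
Require Import Defs.
From Stdlib Require Import Reals Lra Psatz.
Open Scope R_scope.

Theorem proposition2p2 (alpha beta : R) (halpha : 0 < alpha) (hbeta : 0 < beta)
  (p00 p01 p10 p11 : R) (hP : is_table p00 p01 p10 p11) :
  (p00 * p11 / (p01 * p10) = alpha ^ 2 /\ p00 * p10 / (p01 * p11) = beta ^ 2)
  <->
  (exists v : R, 0 < v /\ v < 1 / (alpha + beta) /\
     p00 = beta / (beta + 1 / alpha) * (1 - (beta + alpha) * v) /\
     p01 = 1 / (alpha * beta + 1) * (1 - (beta + alpha) * v) /\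
     p10 = beta * v /\
     p11 = alpha * v).
Proof.
  destruct hP as [h0 [h1 [h2 [h3 hs]]]].
  split.
  - intros [HA HB].
    assert (A : p00 * p11 = alpha ^ 2 * (p01 * p10)).
    { rewrite <- HA. field. lra. }
    assert (B : p00 * p10 = beta ^ 2 * (p01 * p11)).
    { rewrite <- HB. field. lra. }
    assert (C : (alpha * p10 - beta * p11) * (alpha * p10 + beta * p11) * (p00 * p01) = 0).
    { replace ((alpha * p10 - beta * p11) * (alpha * p10 + beta * p11) * (p00 * p01))
        with (p00 * (alpha^2 * (p01 * p10) * p10 - beta^2 * (p01 * p11) * p11)) by ring.
      rewrite <- A, <- B. ring. }
    assert (D : alpha * p10 = beta * p11).
    { assert (P1 : 0 < alpha * p10 + beta * p11) by nra.
      assert (P2 : 0 < p00 * p01) by nra.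
      apply Rmult_integral in C. destruct C as [C|C]; [|lra].
      apply Rmult_integral in C. destruct C as [C|C]; lra. }
    assert (E : p00 = alpha * beta * p01).
    { apply (Rmult_eq_reg_r p11); [|lra].
      rewrite A. apply (Rmult_eq_reg_r beta); [|lra].
      replace (alpha ^ 2 * (p01 * p10) * beta) with (alpha * p01 * (alpha * p10) * beta) by ring.
      rewrite D. ring. }
    exists (p10 / beta).
    assert (Hv : p10 = beta * (p10 / beta)) by (field; lra).
    assert (Hw : p11 = alpha * (p10 / beta)).
    { apply (Rmult_eq_reg_l beta); [|lra]. rewrite <- D. field. lra. }
    assert (Hsum : (alpha * beta + 1) * p01 = 1 - (beta + alpha) * (p10 / beta)).
    { replace ((beta + alpha) * (p10/beta)) with (p10 + alpha*(p10/beta)) by (field; lra).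
      rewrite <- Hw. lra. }
    repeat split.
    + apply Rdiv_lt_0_compat; lra.
    + assert (0 < 1 - (beta + alpha) * (p10 / beta)) by nra.
      apply (Rmult_lt_reg_l (alpha + beta)); [lra|].
      replace ((alpha + beta) * (1 / (alpha + beta))) with 1 by (field; lra). lra.
    + rewrite <- Hsum, E. field. split; try lra. nra.
    + rewrite <- Hsum. field. nra.
    + exact Hv.
    + exact Hw.
  - intros [v [hv1 [hv2 [e0 [e1 [e2 e3]]]]]].
    assert (hw : 0 < 1 - (beta + alpha) * v).
    { apply (Rmult_lt_compat_l (alpha + beta)) in hv2; [|lra].
      replace ((alpha + beta) * (1 / (alpha + beta))) with 1 in hv2 by (field; lra). lra. }
    subst. split; field; repeat split; try lra; try nra.
Qed.
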